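(* Let $C$ be a small 2-category in which every 2-cell is invertible, let $n\ge 2$ and $1\le k\le n-1$. Then the square with maps $N^{k-1}_nC\to N^k_nC$ (restriction), $N^{k-1}_nC\to C_2$ ($u\mapsto u_{n,k,k-1}$), $\phi^k_n\colon N^k_nC\to C_1$, $\phi^k_n(u)=u_{n,k}\circ u_{k,k-1}$, and the target map $t\colon C_2\to C_1$ is a set-theoretic pullback; that is, the induced map $N^{k-1}_nC\to N^k_nC\times_{C_1}C_2$ is a bijection.
   Context: The nerve $NC$ of a 2-category $C$ is the simplicial set whose $n$-simplices are normal lax functors $[n]\dashrightarrow C$ (where $[n]=\{0<\dots<n\}$ is viewed as a 2-category with only identity 2-cells), with simplicial operators given by precomposition. Concretely an $n$-simplex $u$ is given by objects $u_i$, arrows $u_{j,i}\colon u_i\to u_j$ for $i<j$ (with $u_{i,i}=\mathrm{id}$), and 2-cells $u_{l,j,i}\colon u_{l,i}\Rightarrow u_{l,j}\circ u_{j,i}$ for $i<j<l$ (identities when two indices coincide), such that for each $i<j<k<l$: $(u_{l,k}\circ u_{k,j,i})\bullet u_{l,k,i}=(u_{l,k,j}\circ u_{j,i})\bullet u_{l,j,i}$. Simplices of $\Delta^n$ are order-preserving maps $a\colon[m]\to[n]$. For $0\le k\le n-1$ let $F_k\Delta^n\subset\Delta^n$ be the simplicial subset of those $a\colon[m]\to[n]$ with $a(m)<n$ or $a(0)\ge k$ (so $F_0\Delta^n=\Delta^n$; it is the union of the face $d_n\Delta^n\cong\Delta^{n-1}$ with the face spanned by vertices $k,\dots,n$), and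 let $N^k_nC$ be the set of simplicial maps $F_k\Delta^n\to NC$; thus $N^0_nC=NC_n$ and restriction gives maps $N^{k-1}_nC\to N^k_nC$. For $u\in N^k_nC$ we use the notation $u_i,u_{j,i},u_{l,j,i}$ for the images of the vertices, edges and triangles contained in $F_k\Delta^n$. $C_1$, $C_2$ denote the sets of arrows and 2-cells, and $t$ the target of 2-cells. *)

(* Defs.v *)
From mathcomp Require Import all_boot.
Set Implicit Arguments. Unset Strict Implicit. Unset Printing Implicit Defensive.

(* Strict (small) 2-categories, presented "set-theoretically":         *)
(* objects, arrows (C_1) and 2-cells (C_2) with source/target maps and *)
(* composition operations; the axioms are required on composable data. *)
(*   comp g f   = g o f           (f : a -> b, g : b -> c)             *)
(*   vcomp b a  = b . a (vertical) (a : f => g, b : g => h)            *)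
(*   hcomp b a  = b o a (horizontal)                                   *)
Record TwoCat := {
  Ob : Type; Ar : Type; Cell : Type;
  src : Ar -> Ob; tgt : Ar -> Ob; id1 : Ob -> Ar; comp : Ar -> Ar -> Ar;
  s2 : Cell -> Ar; t2 : Cell -> Ar; id2 : Ar -> Cell;
  vcomp : Cell -> Cell -> Cell; hcomp : Cell -> Cell -> Cell;
  src_id1 : forall a, src (id1 a) = a;
  tgt_id1 : forall a, tgt (id1 a) = a;
  src_comp : forall g f, src g = tgt f -> src (comp g f) = src f;
  tgt_comp : forall g f, src g = tgt f -> tgt (comp g f) = tgt g;
  comp_id1r : forall f, comp f (id1 (src f)) = f;
  comp_id1l : forall f, comp (id1 (tgt f)) f = f;
  compA : forall h g f, src h = tgt g -> src g = tgt f ->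
    comp h (comp g f) = comp (comp h g) f;
  src_s2t2 : forall a, src (s2 a) = src (t2 a);
  tgt_s2t2 : forall a, tgt (s2 a) = tgt (t2 a);
  s2_id2 : forall f, s2 (id2 f) = f;
  t2_id2 : forall f, t2 (id2 f) = f;
  s2_vcomp : forall b a, s2 b = t2 a -> s2 (vcomp b a) = s2 a;
  t2_vcomp : forall b a, s2 b = t2 a -> t2 (vcomp b a) = t2 b;
  vcomp_id2r : forall a, vcomp a (id2 (s2 a)) = a;
  vcomp_id2l : forall a, vcomp (id2 (t2 a)) a = a;
  vcompA : forall c b a, s2 c = t2 b -> s2 b = t2 a ->
    vcomp c (vcomp b a) = vcomp (vcomp c b) a;
  s2_hcomp : forall b a, src (s2 b) = tgt (s2 a) ->
    s2 (hcomp b a) = comp (s2 b) (s2 a);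
  t2_hcomp : forall b a, src (s2 b) = tgt (s2 a) ->
    t2 (hcomp b a) = comp (t2 b) (t2 a);
  hcomp_id1r : forall a, hcomp a (id2 (id1 (src (s2 a)))) = a;
  hcomp_id1l : forall a, hcomp (id2 (id1 (tgt (s2 a)))) a = a;
  hcompA : forall c b a, src (s2 c) = tgt (s2 b) -> src (s2 b) = tgt (s2 a) ->
    hcomp c (hcomp b a) = hcomp (hcomp c b) a;
  hcomp_id2 : forall g f, src g = tgt f -> hcomp (id2 g) (id2 f) = id2 (comp g f);
  interchange : forall b' b a' a, s2 b' = t2 b -> s2 a' = t2 a ->
    src (s2 b) = tgt (s2 a) ->
    hcomp (vcomp b' b) (vcomp a' a) = vcomp (hcomp b' a') (hcomp b a)
}.

Arguments src {_}. Arguments tgt {_}. Arguments id1 {_}. Arguments comp {_}.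
Arguments s2 {_}. Arguments t2 {_}. Arguments id2 {_}.
Arguments vcomp {_}. Arguments hcomp {_}.

Definition cells_invertible (C : TwoCat) : Prop :=
  forall a : Cell C, exists b : Cell C,
    [/\ s2 b = t2 a, t2 b = s2 a, vcomp b a = id2 (s2 a) & vcomp a b = id2 (t2 a)].

(* The nerve NC.  An m-simplex is a normal lax functor [m] -> C, given *)
(* by u_i (sob), u_{j,i} (sar j i) and u_{l,j,i} (scl l j i).          *)
(* Values at non-meaningful index triples (not i <= j, resp. not       *)
(* i <= j <= l) are fixed to canonical "junk" values so that the data  *)
(* of a simplex is exactly the data of a normal lax functor.           *)
Record sdata (C : TwoCat) (m : nat) := SData {
  sob : 'I_m.+1 -> Ob C;
  sar : 'I_m.+1 -> 'I_m.+1 -> Ar C;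
  scl : 'I_m.+1 -> 'I_m.+1 -> 'I_m.+1 -> Cell C }.

Definition is_simplex (C : TwoCat) (m : nat) (u : sdata C m) : Prop :=
  (forall i j : 'I_m.+1, i <= j ->
        src (sar u j i) = sob u i /\ tgt (sar u j i) = sob u j) /\
  (forall i : 'I_m.+1, sar u i i = id1 (sob u i)) /\
  (forall i j l : 'I_m.+1, i <= j -> j <= l ->
        s2 (scl u l j i) = sar u l i /\
        t2 (scl u l j i) = comp (sar u l j) (sar u j i)) /\
  (forall i j l : 'I_m.+1, i <= j -> j <= l -> (i = j \/ j = l) ->
        scl u l j i = id2 (sar u l i)) /\
  (forall i j k l : 'I_m.+1, i < j -> j < k -> k < l ->
        vcomp (hcomp (id2 (sar u l k)) (scl u k j i)) (scl u l k i) =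
        vcomp (hcomp (scl u l k j) (id2 (sar u j i))) (scl u l j i)) /\
      (forall i j : 'I_m.+1, j < i -> sar u j i = id1 (sob u i)) /\
      (forall i j l : 'I_m.+1, ~~ ((i <= j) && (j <= l)) ->
         scl u l j i = id2 (id1 (sob u i))).

Definition mono (m n : nat) :=
  {f : 'I_m.+1 -> 'I_n.+1 | forall i j : 'I_m.+1, i <= j -> f i <= f j}.

Definition mcomp (m' m n : nat) (a : mono m n) (b : mono m' m) : mono m' n :=
  @exist _ (fun f : 'I_m'.+1 -> 'I_n.+1 => forall i j : 'I_m'.+1, i <= j -> f i <= f j)
    (fun i => sval a (sval b i))
    (fun i j h => proj2_sig a _ _ (proj2_sig b _ _ h)).

Definition restr (C : TwoCat) (m m' : nat) (u : sdata C m) (b : mono m' m)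
  : sdata C m' :=
  SData (fun i => sob u (sval b i))
    (fun j i => if i <= j then sar u (sval b j) (sval b i)
                else id1 (sob u (sval b i)))
    (fun l j i => if (i <= j) && (j <= l)
                  then scl u (sval b l) (sval b j) (sval b i)
                  else id2 (id1 (sob u (sval b i)))).

Definition inF (n k m : nat) (a : mono m n) : bool :=
  (sval a ord_max < n) || (k <= sval a ord0).

(* N^k_n C : simplicial maps F_k Delta^n -> NC *)
Record nerve_map (C : TwoCat) (n k : nat) := NMap {
  nm : forall m (a : mono m n), inF k a -> sdata C m;
  nm_simplex : forall m (a : mono m n) (Ha : inF k a), is_simplex (nm Ha);
  nm_nat : forall m m' (a : mono m n) (b : mono m' m)
    (Ha : inF k a) (Hab : inF k (mcomp a b)),
    nm Hab = restr (nm Ha) b }.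

Lemma inF_pred (n k m : nat) (a : mono m n) : inF k a -> inF k.-1 a.
Proof.
rewrite /inF => /orP [->|h] //; apply/orP; right.
exact: leq_trans (leq_pred k) h.
Qed.

Definition resK (C : TwoCat) (n k : nat) (u : nerve_map C n k.-1)
  : nerve_map C n k :=
  @NMap C n k (fun m a Ha => nm u (inF_pred Ha))
    (fun m a Ha => nm_simplex u (inF_pred Ha))
    (fun m m' a b Ha Hab => @nm_nat C n k.-1 u m m' a b (inF_pred Ha) (inF_pred Hab)).

Definition edge (n : nat) (i j : 'I_n.+1) (h : i <= j) : mono 1 n.
Proof.
exists (fun t : 'I_2 => if val t is 0 then i else j).
move=> [[|[|s]] Hs] [[|[|t]] Ht] //= H; by rewrite ?leqnn.
Defined.

Definition tri (n : nat) (i j l : 'I_n.+1) (h1 : i <= j) (h2 : j <= l)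
  : mono 2 n.
Proof.
exists (fun t : 'I_3 => match val t with 0 => i | 1 => j | _ => l end).
move=> [[|[|[|s]]] Hs] [[|[|[|t]]] Ht] //= H; rewrite ?leqnn //.
exact: leq_trans h1 h2.
Defined.

(* the vertices k-1, k, n of Delta^n, for k : 'I_n (i.e. k <= n-1) *)
Definition vk (n : nat) (k : 'I_n) : 'I_n.+1 := Ordinal (leqW (ltn_ord k)).
Definition vkm1 (n : nat) (k : 'I_n) : 'I_n.+1 :=
  Ordinal (leq_ltn_trans (leq_pred k) (leqW (ltn_ord k))).
Definition vn (n : nat) : 'I_n.+1 := ord_max.

Lemma le_km1_k (n : nat) (k : 'I_n) : vkm1 k <= vk k.
Proof. exact: leq_pred. Qed.
Lemma le_k_n (n : nat) (k : 'I_n) : vk k <= vn n.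
Proof. exact: ltnW (ltn_ord k). Qed.

Definition tri_kn (n : nat) (k : 'I_n) : mono 2 n :=
  tri (le_km1_k k) (le_k_n k).
Definition edge_kn (n : nat) (k : 'I_n) : mono 1 n := edge (le_k_n k).
Definition edge_km1k (n : nat) (k : 'I_n) : mono 1 n := edge (le_km1_k k).

Lemma tri_kn_in (n : nat) (k : 'I_n) : inF k.-1 (tri_kn k).
Proof. by rewrite /inF /= leqnn orbT. Qed.
Lemma edge_kn_in (n : nat) (k : 'I_n) : inF k (edge_kn k).
Proof. by rewrite /inF /= leqnn orbT. Qed.
Lemma edge_km1k_in (n : nat) (k : 'I_n) : inF k (edge_km1k k).
Proof. by rewrite /inF /= ltn_ord. Qed.

Definition o3_0 : 'I_3 := ord0.
Definition o3_1 : 'I_3 := Ordinal (isT : 1 < 3).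
Definition o3_2 : 'I_3 := ord_max.
Definition o2_0 : 'I_2 := ord0.
Definition o2_1 : 'I_2 := ord_max.

Definition cell_nkkm1 (C : TwoCat) (n : nat) (k : 'I_n)
  (u : nerve_map C n k.-1) : Cell C :=
  scl (nm u (tri_kn_in k)) o3_2 o3_1 o3_0.

Definition phi (C : TwoCat) (n : nat) (k : 'I_n) (u : nerve_map C n k) : Ar C :=
  comp (sar (nm u (edge_kn_in k)) o2_1 o2_0)
       (sar (nm u (edge_km1k_in k)) o2_1 o2_0).

(* Main.v *)
From mathcomp Require Import all_boot.
Require Import Defs.
From Stdlib Require Import FunctionalExtensionality ProofIrrelevance IndefiniteDescription.
Set Implicit Arguments. Unset Strict Implicit. Unset Printing Implicit Defensive.

Lemma mono_eq m n (a b : mono m n) : (forall i, sval a i = sval b i) -> a = b.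
Proof.
case: a b => [f hf] [g hg] /= e.
have efg : f = g := functional_extensionality _ _ e.
subst g; by rewrite (proof_irrelevance _ hf hg).
Qed.

Definition monob m n (f : 'I_m.+1 -> 'I_n.+1) : bool :=
  [forall i : 'I_m.+1, forall j : 'I_m.+1, (i <= j) ==> (f i <= f j)].

Lemma monobP m n (f : 'I_m.+1 -> 'I_n.+1) :
  reflect (forall i j : 'I_m.+1, i <= j -> f i <= f j) (monob f).
Proof.
apply: (iffP forallP) => H.
  by move=> i j hij; move/forallP: (H i) => /(_ j) /implyP; apply.
by move=> i; apply/forallP => j; apply/implyP; apply: H.
Qed.

Definition mkm m n (f : 'I_m.+1 -> 'I_n.+1) : mono m n :=
  match monobP f with
  | ReflectT H => exist _ f H
  | ReflectF _ => exist (fun g : 'I_m.+1 -> 'I_n.+1 => forall i j : 'I_m.+1, i <= j -> g i <= g j)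
        (fun _ => ord0) (fun _ _ _ => leqnn 0)
  end.

Lemma mkmE m n (f : 'I_m.+1 -> 'I_n.+1) :
  (forall i j : 'I_m.+1, i <= j -> f i <= f j) -> sval (mkm f) = f.
Proof. by rewrite /mkm => H; case: monobP. Qed.

Lemma inF_mcomp n j m m' (a : mono m n) (b : mono m' m) : inF j a -> inF j (mcomp a b).
Proof.
rewrite /inF /= => /orP [h|h]; apply/orP.
  left; apply: leq_ltn_trans h; apply: (proj2_sig a); exact: leq_ord.
right; apply: leq_trans h _; apply: (proj2_sig a); done.
Qed.

Definition f2 T (p q : T) (t : 'I_2) : T := if val t == 0 then p else q.
Definition f3 T (p q r : T) (t : 'I_3) : T :=
  if val t == 0 then p else if val t == 1 then q else r.
Definition f4 T (p q r s : T) (t : 'I_4) : T :=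
  if val t == 0 then p else if val t == 1 then q else if val t == 2 then r else s.

Lemma f1_mono m (i : 'I_m.+1) : forall s t : 'I_1, s <= t -> (fun _ => i) s <= (fun _ => i) t.
Proof. by []. Qed.
Lemma f2_mono N (p q : 'I_N) : p <= q -> forall s t : 'I_2, s <= t -> f2 p q s <= f2 p q t.
Proof. by move=> h [[|[|?]] ?] [[|[|?]] ?] //=. Qed.
Lemma f3_mono N (p q r : 'I_N) : p <= q -> q <= r ->
  forall s t : 'I_3, s <= t -> f3 p q r s <= f3 p q r t.
Proof.
move=> h1 h2 [[|[|[|?]]] ?] [[|[|[|?]]] ?] //= _; exact: leq_trans h1 h2.
Qed.
Lemma f4_mono N (p q r s : 'I_N) : p <= q -> q <= r -> r <= s ->
  forall x y : 'I_4, x <= y -> f4 p q r s x <= f4 p q r s y.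
Proof.
move=> h1 h2 h3 [[|[|[|[|?]]]] ?] [[|[|[|[|?]]]] ?] //= _;
  by [apply: leq_trans h1 _; apply: leq_trans h2 _ | apply: leq_trans h2 h3 | apply: leq_trans h1 h2].
Qed.

Lemma nerve_map_eq C n j (u v : nerve_map C n j) :
  (forall m (a : mono m n) (Ha : inF j a), nm u Ha = nm v Ha) -> u = v.
Proof.
case: u v => [nu su tu] [nv sv tv] /= e.
have E : nu = nv.
  apply: functional_extensionality_dep => m; apply: functional_extensionality_dep => a.
  apply: functional_extensionality_dep => Ha; exact: e.
subst nv; by rewrite (proof_irrelevance _ su sv) (proof_irrelevance _ tu tv).
Qed.

Section Get.
Variables (C : TwoCat) (n j : nat) (o0 : Ob C).

Definition dflt m : sdata C m :=
  SData (fun _ => o0) (fun _ _ => id1 o0) (fun _ _ _ => id2 (id1 o0)).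

Definition getv (w : nerve_map C n j) m (a : mono m n) : sdata C m :=
  (if inF j a as b return (inF j a = b -> sdata C m) then fun H => nm w H
   else fun _ => dflt m) erefl.

Lemma getvE w m (a : mono m n) (H : inF j a) : getv w a = nm w H.
Proof.
rewrite /getv; move: (erefl (inF j a)).
case: {2 3}(inF j a) => e; last by rewrite H in e.
by rewrite (bool_irrelevance e H).
Qed.

Definition SD (O : 'I_n.+1 -> Ob C) (A : 'I_n.+1 -> 'I_n.+1 -> Ar C)
  (T : 'I_n.+1 -> 'I_n.+1 -> 'I_n.+1 -> Cell C) m (f : 'I_m.+1 -> 'I_n.+1) : sdata C m :=
  SData (fun i => O (f i))
    (fun j i => if i <= j then A (f j) (f i) else id1 (O (f i)))
    (fun l j i => if (i <= j) && (j <= l) then T (f l) (f j) (f i)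
                  else id2 (id1 (O (f i)))).

Variable w : nerve_map C n j.
Definition Ow (p : 'I_n.+1) : Ob C := sob (getv w (mkm (fun _ : 'I_1 => p))) ord0.
Definition Aw (q p : 'I_n.+1) : Ar C := sar (getv w (mkm (f2 p q))) o2_1 o2_0.
Definition Tw (r q p : 'I_n.+1) : Cell C := scl (getv w (mkm (f3 p q r))) o3_2 o3_1 o3_0.

Lemma face m m' (a : mono m n) (b : mono m' m) (Ha : inF j a) f :
  (forall t, f t = sval a (sval b t)) -> getv w (mkm f) = restr (nm w Ha) b.
Proof.
move=> ef.
have -> : mkm f = mcomp a b.
  apply: mono_eq => t /=; rewrite mkmE ?ef //.
  move=> s t' h; rewrite !ef; apply: (proj2_sig a); exact: (proj2_sig b).
rewrite (getvE w (inF_mcomp b Ha)); exact: nm_nat.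
Qed.

Lemma sdata_eta m (x : sdata C m) : x = SData (sob x) (sar x) (scl x).
Proof. by case: x. Qed.

Lemma repr m (a : mono m n) (Ha : inF j a) : nm w Ha = SD Ow Aw Tw (sval a).
Proof.
have [_ [_ [_ [_ [_ [J1 J2]]]]]] := nm_simplex w Ha.
have Eo : forall i, Ow (sval a i) = sob (nm w Ha) i.
  move=> i; rewrite /Ow (face (b := mkm (fun _ : 'I_1 => i)) Ha) //=.
    by rewrite mkmE.
  by move=> t; rewrite mkmE.
rewrite [LHS]sdata_eta /SD; congr SData.
- by apply: functional_extensionality => i.
- apply: functional_extensionality => j'; apply: functional_extensionality => i.
  case: leqP => h.
    rewrite /Aw (face (b := mkm (f2 i j')) Ha) /=.
      by rewrite mkmE //; exact: f2_mono.
    by move=> t; rewrite mkmE //; [case: t => [[|[|?]] ?] | exact: f2_mono].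
  by rewrite J1 // Eo.
- apply: functional_extensionality => l; apply: functional_extensionality => j';
  apply: functional_extensionality => i.
  case: ifP => h.
    case/andP: h => h1 h2.
    rewrite /Tw (face (b := mkm (f3 i j' l)) Ha) /=.
      by rewrite mkmE //; exact: f3_mono.
    by move=> t; rewrite mkmE //; [case: t => [[|[|[|?]]] ?] | exact: f3_mono].
  by rewrite J2 ?h // Eo.
Qed.

End Get.

Lemma SD_simplex (C : TwoCat) n (O : 'I_n.+1 -> Ob C) (A : 'I_n.+1 -> 'I_n.+1 -> Ar C) (T : 'I_n.+1 -> 'I_n.+1 -> 'I_n.+1 -> Cell C)
  (Fp : 'I_n.+1 -> 'I_n.+1 -> Prop) m (f : 'I_m.+1 -> 'I_n.+1)
 (fmono : forall i j : 'I_m.+1, i <= j -> f i <= f j)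
 (fF : forall i j : 'I_m.+1, i <= j -> Fp (f i) (f j))
 (C1 : forall p q : 'I_n.+1, p <= q -> Fp p q -> src (A q p) = O p /\ tgt (A q p) = O q)
 (C2 : forall p, A p p = id1 (O p))
 (C3 : forall p q r : 'I_n.+1, p <= q -> q <= r -> Fp p r ->
    s2 (T r q p) = A r p /\ t2 (T r q p) = comp (A r q) (A q p))
 (C4 : forall p q r : 'I_n.+1, p <= q -> q <= r -> Fp p r -> (p = q \/ q = r) ->
    T r q p = id2 (A r p))
 (FpW : forall p s p' s' : 'I_n.+1, Fp p s -> p <= p' -> s' <= s -> Fp p' s')
 (C5 : forall p q r s : 'I_n.+1, p < q -> q < r -> r < s -> Fp p s ->
    vcomp (hcomp (id2 (A s r)) (T r q p)) (T s r p) =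
    vcomp (hcomp (T s r q) (id2 (A q p))) (T s q p)) :
 is_simplex (@SD C n O A T m f).
Proof.
have C5' : forall p q r s : 'I_n.+1, p <= q -> q <= r -> r <= s -> Fp p s ->
    vcomp (hcomp (id2 (A s r)) (T r q p)) (T s r p) =
    vcomp (hcomp (T s r q) (id2 (A q p))) (T s q p).
  move=> p q r s h1 h2 h3 hF.
  have h12 := leq_trans h1 h2; have h23 := leq_trans h2 h3.
  have Fpr : Fp p r := FpW _ _ _ _ hF (leqnn p) h3.
  have Fqs : Fp q s := FpW _ _ _ _ hF h1 (leqnn s).
  have Fpq : Fp p q := FpW _ _ _ _ hF (leqnn p) h23.
  have Fqr : Fp q r := FpW _ _ _ _ hF h1 h3.
  have Frs : Fp r s := FpW _ _ _ _ hF h12 (leqnn s).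
  case: (eqVneq p q) => [epq|npq].
    subst q; rewrite (C4 _ _ _ (leqnn p) h2 Fpr (or_introl erefl)).
    rewrite (C4 _ _ _ (leqnn p) h23 hF (or_introl erefl)) C2.
    have [e1 e2] := C3 _ _ _ h2 h3 hF.
    rewrite hcomp_id2; last by rewrite (proj1 (C1 _ _ h3 Frs)) (proj2 (C1 _ _ h2 Fpr)).
    rewrite -e2 vcomp_id2l.
    have -> : O p = src (s2 (T s r p)) by rewrite e1 (proj1 (C1 _ _ h23 hF)).
    by rewrite hcomp_id1r -e1 vcomp_id2r.
  case: (eqVneq q r) => [eqr|nqr].
    subst r; rewrite (C4 _ _ _ h1 (leqnn q) Fpq (or_intror erefl)).
    by rewrite (C4 _ _ _ (leqnn q) h3 Fqs (or_introl erefl)).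
  case: (eqVneq r s) => [ers|nrs].
    subst s; rewrite (C4 _ _ _ h12 (leqnn r) hF (or_intror erefl)).
    rewrite (C4 _ _ _ h2 (leqnn r) Fqr (or_intror erefl)) C2.
    have [e1 e2] := C3 _ _ _ h1 h2 hF.
    rewrite hcomp_id2; last by rewrite (proj1 (C1 _ _ h2 Fqr)) (proj2 (C1 _ _ h1 Fpq)).
    rewrite -e2 vcomp_id2l.
    have -> : O r = tgt (s2 (T r q p)) by rewrite e1 (proj2 (C1 _ _ h12 hF)).
    by rewrite hcomp_id1l -e1 vcomp_id2r.
  apply: C5 => //; by rewrite ltn_neqAle ?npq ?nqr ?nrs ?h1 ?h2 ?h3.
rewrite /is_simplex /SD /=.
split; [|split; [|split; [|split; [|split; [|split]]]]].
- by move=> i j h; rewrite h; apply: C1; [exact: fmono | exact: fF].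
- by move=> i; rewrite leqnn C2.
- move=> i j l h1 h2; rewrite h1 h2 (leq_trans h1 h2) /=.
  apply: C3; try exact: fmono.
  exact: fF (leq_trans h1 h2).
- move=> i j l h1 h2 e; rewrite h1 h2 (leq_trans h1 h2) /=.
  apply: C4; try exact: fmono; first exact: fF (leq_trans h1 h2).
  by case: e => ->; [left|right].
- move=> i j k l h1 h2 h3.
  have h1' := ltnW h1; have h2' := ltnW h2; have h3' := ltnW h3.
  rewrite h1' h2' h3' (leq_trans h1' h2') (leq_trans h2' h3') /=.
  apply: C5'; try exact: fmono.
  by apply: fF; apply: leq_trans h1' _; apply: leq_trans h2' h3'.
- by move=> i j h; rewrite leqNgt h.
- by move=> i j l /negbTE ->.
Qed.

Section Alg.
Variable C : TwoCat.
Variable inv : Cell C -> Cell C.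
Hypothesis inv_s2 : forall a, s2 (inv a) = t2 a.
Hypothesis inv_t2 : forall a, t2 (inv a) = s2 a.
Hypothesis inv_l : forall a, vcomp (inv a) a = id2 (s2 a).
Hypothesis inv_r : forall a, vcomp a (inv a) = id2 (t2 a).

Ltac tc := repeat first
 [ rewrite s2_id2 | rewrite t2_id2 | rewrite src_id1 | rewrite tgt_id1
 | rewrite inv_s2 | rewrite inv_t2
 | match goal with
   | |- context [s2 (hcomp ?b ?a)] => rewrite (@s2_hcomp _ b a); [|by tc]
   | |- context [t2 (hcomp ?b ?a)] => rewrite (@t2_hcomp _ b a); [|by tc]
   | |- context [s2 (vcomp ?b ?a)] => rewrite (@s2_vcomp _ b a); [|by tc]
   | |- context [t2 (vcomp ?b ?a)] => rewrite (@t2_vcomp _ b a); [|by tc]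
   | |- context [src (comp ?g ?f)] => rewrite (@src_comp _ g f); [|by tc]
   | |- context [tgt (comp ?g ?f)] => rewrite (@tgt_comp _ g f); [|by tc]
   | H : s2 ?x = _ |- context [s2 ?x] => rewrite H
   | H : t2 ?x = _ |- context [t2 ?x] => rewrite H
   | H : src ?x = _ |- context [src ?x] => rewrite H
   | H : tgt ?x = _ |- context [tgt ?x] => rewrite H
   end ].

Definition tau (Anq : Ar C) (Tqk : Cell C) (Tnqk : Cell C) (Ak : Ar C) (x : Cell C) :=
  vcomp (inv (hcomp (id2 Anq) Tqk)) (vcomp (hcomp Tnqk (id2 Ak)) x).

Lemma tau_eq (o0 o1 o2 o4 : Ob C) (a10 a20 a21 a40 a41 a42 : Ar C) (T210 T421 x : Cell C) :
  src a10 = o0 -> tgt a10 = o1 -> src a21 = o1 -> tgt a21 = o2 ->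
  src a42 = o2 -> tgt a42 = o4 -> src a20 = o0 -> tgt a20 = o2 ->
  src a41 = o1 -> tgt a41 = o4 ->
  s2 T210 = a20 -> t2 T210 = comp a21 a10 ->
  s2 T421 = a41 -> t2 T421 = comp a42 a21 ->
  t2 x = comp a41 a10 ->
  vcomp (hcomp (id2 a42) T210) (tau a42 T210 T421 a10 x) =
  vcomp (hcomp T421 (id2 a10)) x.
Proof.
move=> *.
have E : t2 (hcomp (id2 a42) T210) = t2 (vcomp (hcomp T421 (id2 a10)) x).
  tc. by rewrite compA; tc.
rewrite /tau vcompA; last by rewrite inv_s2 E.
  by rewrite inv_r E vcomp_id2l.
by rewrite inv_t2.
Qed.

Lemma tau_s2 (o0 o1 o2 o4 : Ob C) (a10 a20 a21 a40 a41 a42 : Ar C) (T210 T421 x : Cell C) :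
  src a10 = o0 -> tgt a10 = o1 -> src a21 = o1 -> tgt a21 = o2 ->
  src a42 = o2 -> tgt a42 = o4 -> src a20 = o0 -> tgt a20 = o2 ->
  src a41 = o1 -> tgt a41 = o4 ->
  s2 T210 = a20 -> t2 T210 = comp a21 a10 ->
  s2 T421 = a41 -> t2 T421 = comp a42 a21 ->
  t2 x = comp a41 a10 ->
  s2 (tau a42 T210 T421 a10 x) = s2 x /\ t2 (tau a42 T210 T421 a10 x) = comp a42 a20.
Proof.
move=> *.
have E : t2 (hcomp (id2 a42) T210) = t2 (vcomp (hcomp T421 (id2 a10)) x).
  tc. by rewrite compA; tc.
rewrite /tau; split.
  by rewrite s2_vcomp ?inv_s2 ?E //; tc.
by rewrite t2_vcomp ?inv_s2 ?E //; tc.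
Qed.

Lemma cancel_l (w y y' : Cell C) : s2 w = t2 y -> s2 w = t2 y' ->
  vcomp w y = vcomp w y' -> y = y'.
Proof.
move=> h h' e.
have E : forall z, s2 w = t2 z -> z = vcomp (inv w) (vcomp w z).
  move=> z hz; rewrite vcompA ?inv_s2 ?inv_l ?hz ?vcomp_id2l //.
by rewrite (E _ h) (E _ h') e.
Qed.

Lemma whiskL_v (f : Ar C) (b a : Cell C) : s2 b = t2 a -> src f = tgt (s2 a) ->
  vcomp (hcomp (id2 f) b) (hcomp (id2 f) a) = hcomp (id2 f) (vcomp b a).
Proof.
move=> h1 h2; rewrite -interchange ?s2_id2 ?t2_id2 //.
by have := vcomp_id2l (id2 f); rewrite t2_id2 => ->.
Qed.

Lemma whiskR_v (f : Ar C) (b a : Cell C) : s2 b = t2 a -> src (s2 a) = tgt f ->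
  vcomp (hcomp b (id2 f)) (hcomp a (id2 f)) = hcomp (vcomp b a) (id2 f).
Proof.
move=> h1 h2; rewrite -interchange ?s2_id2 ?t2_id2 //.
by have := vcomp_id2l (id2 f); rewrite t2_id2 => ->.
Qed.

Lemma big_cocycle (o0 o1 o2 o3 o4 : Ob C)
  (a10 a20 a30 a40 a21 a31 a41 a32 a42 a43 : Ar C)
  (T210 T310 T320 T321 T421 T431 T432 x t2c t3c : Cell C) :
  src a10 = o0 -> tgt a10 = o1 -> src a20 = o0 -> tgt a20 = o2 ->
  src a30 = o0 -> tgt a30 = o3 -> src a40 = o0 -> tgt a40 = o4 ->
  src a21 = o1 -> tgt a21 = o2 -> src a31 = o1 -> tgt a31 = o3 ->
  src a41 = o1 -> tgt a41 = o4 -> src a32 = o2 -> tgt a32 = o3 ->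
  src a42 = o2 -> tgt a42 = o4 -> src a43 = o3 -> tgt a43 = o4 ->
  s2 T210 = a20 -> t2 T210 = comp a21 a10 ->
  s2 T310 = a30 -> t2 T310 = comp a31 a10 ->
  s2 T320 = a30 -> t2 T320 = comp a32 a20 ->
  s2 T321 = a31 -> t2 T321 = comp a32 a21 ->
  s2 T421 = a41 -> t2 T421 = comp a42 a21 ->
  s2 T431 = a41 -> t2 T431 = comp a43 a31 ->
  s2 T432 = a42 -> t2 T432 = comp a43 a32 ->
  s2 x = a40 -> t2 x = comp a41 a10 ->
  s2 t2c = a40 -> t2 t2c = comp a42 a20 ->
  s2 t3c = a40 -> t2 t3c = comp a43 a30 ->
  vcomp (hcomp (id2 a42) T210) t2c = vcomp (hcomp T421 (id2 a10)) x ->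
  vcomp (hcomp (id2 a43) T310) t3c = vcomp (hcomp T431 (id2 a10)) x ->
  vcomp (hcomp (id2 a32) T210) T320 = vcomp (hcomp T321 (id2 a10)) T310 ->
  vcomp (hcomp (id2 a43) T321) T431 = vcomp (hcomp T432 (id2 a21)) T421 ->
  vcomp (hcomp (id2 a43) T320) t3c = vcomp (hcomp T432 (id2 a20)) t2c.
Proof.
move=> ? ? ? ? ? ? ? ? ? ? ? ? ? ? ? ? ? ? ? ? ? ? ? ? ? ? ? ? ? ? ? ? ? ? ? ? ? ? ? ?
  H2 H3 CA CB.
have cA : comp a43 (comp a32 a20) = comp (comp a43 a32) a20 by rewrite compA; tc.
pose W := hcomp (id2 a43) (hcomp (id2 a32) T210).
apply: (@cancel_l W); rewrite /W; try by tc.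

rewrite vcompA; try by tc.
rewrite whiskL_v; try by tc.
rewrite CA -whiskL_v; try by tc.
rewrite -vcompA; try by tc.
rewrite H3 vcompA; try by tc.
rewrite hcompA; try by tc.
rewrite whiskR_v; try by tc.
rewrite CB.
rewrite vcompA; try by tc.
have E1 : vcomp (hcomp (id2 a43) (hcomp (id2 a32) T210)) (hcomp T432 (id2 a20)) =
          vcomp (hcomp T432 (id2 (comp a21 a10))) (hcomp (id2 a42) T210).
  have -> : hcomp (id2 a43) (hcomp (id2 a32) T210) = hcomp (id2 (comp a43 a32)) T210.
    by rewrite hcompA ?hcomp_id2 //; tc.
  rewrite -interchange; try by tc.
  rewrite -interchange; try by tc.
  have e1 : comp a43 a32 = t2 T432 by tc.
  have e2 : a20 = s2 T210 by tc.
  have e3 : a42 = s2 T432 by tc.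
  have e4 : comp a21 a10 = t2 T210 by tc.
  by rewrite {1}e1 vcomp_id2l {1}e2 vcomp_id2r {1}e3 vcomp_id2r {1}e4 vcomp_id2l.
rewrite E1 -vcompA; try by tc.
rewrite H2 vcompA; try by tc.
rewrite -hcomp_id2; try by tc.
rewrite hcompA; try by tc.
rewrite whiskR_v; try by tc.
all: by tc; rewrite compA; tc.
Qed.
End Alg.

Section W.
Variables (C : TwoCat) (n j : nat) (o0 : Ob C) (w : nerve_map C n j).
Hypothesis jn : j <= n.

Definition Fw (p s : 'I_n.+1) : Prop := (s < n) || (j <= p).

Lemma FwW (p s p' s' : 'I_n.+1) : Fw p s -> p <= p' -> s' <= s -> Fw p' s'.
Proof.
rewrite /Fw => /orP [h|h] h1 h2; apply/orP; [left|right].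
  exact: leq_ltn_trans h2 h.
exact: leq_trans h h1.
Qed.

Lemma w_simp m (f : 'I_m.+1 -> 'I_n.+1) (fm : forall i j : 'I_m.+1, i <= j -> f i <= f j) :
  Fw (f ord0) (f ord_max) -> is_simplex (SD (Ow o0 w) (Aw o0 w) (Tw o0 w) f).
Proof.
move=> hF.
have Ha : inF j (mkm f) by rewrite /inF mkmE // orbC; move: hF; rewrite /Fw orbC.
by have := nm_simplex w Ha; rewrite (repr o0) mkmE.
Qed.

Lemma wC1 (p q : 'I_n.+1) : p <= q -> Fw p q ->
  src (Aw o0 w q p) = Ow o0 w p /\ tgt (Aw o0 w q p) = Ow o0 w q.
Proof.
move=> h hF; have [S1 _] := w_simp (f2_mono h) hF.
by have := S1 o2_0 o2_1 isT.
Qed.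

Lemma wC2 (p : 'I_n.+1) : Aw o0 w p p = id1 (Ow o0 w p).
Proof.
have hF : Fw p p.
  rewrite /Fw; case: ltnP => //= h; apply: leq_trans jn h.
have [_ [S2 _]] := w_simp (@f1_mono n p) hF.
by have := S2 ord0.
Qed.

Lemma wC3 (p q r : 'I_n.+1) : p <= q -> q <= r -> Fw p r ->
  s2 (Tw o0 w r q p) = Aw o0 w r p /\
  t2 (Tw o0 w r q p) = comp (Aw o0 w r q) (Aw o0 w q p).
Proof.
move=> h1 h2 hF; have [_ [_ [S3 _]]] := w_simp (f3_mono h1 h2) hF.
by have := S3 o3_0 o3_1 o3_2 isT isT.
Qed.

Lemma wC4 (p q r : 'I_n.+1) : p <= q -> q <= r -> Fw p r -> (p = q \/ q = r) ->
  Tw o0 w r q p = id2 (Aw o0 w r p).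
Proof.
move=> h1 h2 hF [e|e]; subst q.
  have [_ [_ [_ [S4 _]]]] := w_simp (f2_mono h2) hF.
  by have := S4 o2_0 o2_0 o2_1 isT isT (or_introl erefl).
have [_ [_ [_ [S4 _]]]] := w_simp (f2_mono h1) hF.
by have := S4 o2_0 o2_1 o2_1 isT isT (or_intror erefl).
Qed.

Definition o4_0 : 'I_4 := ord0.
Definition o4_1 : 'I_4 := Ordinal (isT : 1 < 4).
Definition o4_2 : 'I_4 := Ordinal (isT : 2 < 4).
Definition o4_3 : 'I_4 := ord_max.

Lemma wC5 (p q r s : 'I_n.+1) : p <= q -> q <= r -> r <= s -> Fw p s ->
    vcomp (hcomp (id2 (Aw o0 w s r)) (Tw o0 w r q p)) (Tw o0 w s r p) =
    vcomp (hcomp (Tw o0 w s r q) (id2 (Aw o0 w q p))) (Tw o0 w s q p).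
Proof.
move=> h1 h2 h3 hF; have [_ [_ [_ [_ [S5 _]]]]] := w_simp (f4_mono h1 h2 h3) hF.
by have := S5 o4_0 o4_1 o4_2 o4_3 isT isT isT.
Qed.

End W.

Lemma SD_restr (C : TwoCat) n (O : 'I_n.+1 -> Ob C) (A : 'I_n.+1 -> 'I_n.+1 -> Ar C) (T : 'I_n.+1 -> 'I_n.+1 -> 'I_n.+1 -> Cell C) m m' (f : 'I_m.+1 -> 'I_n.+1) (b : mono m' m) :
  (forall i j : 'I_m.+1, i <= j -> f i <= f j) ->
  SD O A T (fun t => f (sval b t)) = restr (SD O A T f) b.
Proof.
move=> fm; rewrite /SD /restr /=; congr SData.
  apply: functional_extensionality => j; apply: functional_extensionality => i.
  by case: ifP => // h; rewrite (proj2_sig b _ _ h).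
apply: functional_extensionality => l; apply: functional_extensionality => j;
apply: functional_extensionality => i.
case: ifP => //; case/andP => h1 h2; by rewrite (proj2_sig b _ _ h1) (proj2_sig b _ _ h2).
Qed.

Section Main.
Variables (C : TwoCat) (n : nat) (k : 'I_n) (hk : 1 <= k).
Variable inv : Cell C -> Cell C.
Hypothesis inv_s2 : forall a, s2 (inv a) = t2 a.
Hypothesis inv_t2 : forall a, t2 (inv a) = s2 a.
Hypothesis inv_l : forall a, vcomp (inv a) a = id2 (s2 a).
Hypothesis inv_r : forall a, vcomp a (inv a) = id2 (t2 a).
Variables (o0 : Ob C) (v : nerve_map C n k) (x : Cell C).
Hypothesis hx : phi v = t2 x.

Local Notation K := (vk k).
Local Notation K1 := (vkm1 k).
Local Notation N := (vn n).
Local Notation Ov := (Ow o0 v).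
Local Notation Av := (Aw o0 v).
Local Notation Tv := (Tw o0 v).

Lemma kn : (k : nat) <= n. Proof. exact: ltnW (ltn_ord k). Qed.

Definition Au (q p : 'I_n.+1) : Ar C :=
  if (p == K1) && (q == N) then s2 x else Av q p.
Definition Tu (r q p : 'I_n.+1) : Cell C :=
  if (p == K1) && (r == N) then
    (if (q == p) || (q == r) then id2 (s2 x)
     else if q == K then x else tau inv (Av N q) (Tv q K K1) (Tv N q K) (Av K K1) x)
  else Tv r q p.

Lemma notK1N (p r : 'I_n.+1) : @Fw n k p r -> ((p == K1) && (r == N)) = false.
Proof.
rewrite /Fw => h; apply/negbTE/negP => /andP [/eqP e1 /eqP e2]; subst.
move: h; rewrite /= ltnn /=.
by case: (k : nat) hk => // k' _; rewrite /= ltnn.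
Qed.

Lemma Au_v p q : @Fw n k p q -> Au q p = Av q p.
Proof. by move=> h; rewrite /Au notK1N. Qed.
Lemma Tu_v p q r : @Fw n k p r -> Tu r q p = Tv r q p.
Proof. by move=> h; rewrite /Tu notK1N. Qed.

Lemma Fred p s : @Fw n k.-1 p s -> ((p == K1) && (s == N)) = false -> @Fw n k p s.
Proof.
rewrite /Fw => /orP [->//|h] /negbT; rewrite negb_and => /orP [h'|h'].
  apply/orP; right; rewrite leq_eqVlt in h; case/orP: h => [/eqP e|h].
    by move: h'; rewrite -val_eqE /= e eqxx.
  by case: (k : nat) hk h => // k' _.
apply/orP; left; rewrite ltn_neqAle; move: h'; rewrite -val_eqE /= => ->.
by rewrite -ltnS ltn_ord.
Qed.

Lemma phi_eq : phi v = comp (Av N K) (Av K K1).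
Proof. by rewrite /phi !(repr o0). Qed.

Lemma FK1K : @Fw n k K1 K. Proof. by rewrite /Fw /= ltn_ord. Qed.
Lemma FKN : @Fw n k K N. Proof. by rewrite /Fw /= leqnn orbT. Qed.

Lemma src_tx : src (t2 x) = Ov K1 /\ tgt (t2 x) = Ov N.
Proof.
have [a1 a2] := wC1 o0 v (le_km1_k k) FK1K.
have [b1 b2] := wC1 o0 v (le_k_n k) FKN.
rewrite -hx phi_eq src_comp ?tgt_comp //; by rewrite b1 a2.
Qed.


Lemma uC1 (p q : 'I_n.+1) : p <= q -> @Fw n k.-1 p q ->
  src (Au q p) = Ov p /\ tgt (Au q p) = Ov q.
Proof.
move=> h hF; case E: ((p == K1) && (q == N)).
  move/andP: E => [/eqP -> /eqP ->]; rewrite /Au !eqxx /=.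
  by rewrite src_s2t2 tgt_s2t2; exact: src_tx.
rewrite /Au E; exact (wC1 o0 v h (Fred hF E)).
Qed.

Lemma Fkpp (p : 'I_n.+1) : @Fw n k p p.
Proof. rewrite /Fw; case: ltnP => //= h; apply: leq_trans kn h. Qed.

Lemma uC2 (p : 'I_n.+1) : Au p p = id1 (Ov p).
Proof. rewrite (Au_v (Fkpp p)); exact: (wC2 o0 v kn p). Qed.

Lemma K1ltK : (K1 : nat) < K. Proof. by rewrite /=; case: (k : nat) hk. Qed.
Lemma KltN : (K : nat) < N. Proof. by rewrite /=. Qed.

Lemma special_q (q : 'I_n.+1) : K1 <= q -> q <= N -> (q == K1) = false -> (q == N) = false ->
  (q == K) = false -> (K : nat) < q /\ (q : nat) < n.
Proof.
move=> h1 h2 e1 e2 e3; move: e1 e2 e3; rewrite -!val_eqE /= => e1 e2 e3.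
split; last by rewrite ltn_neqAle e2 -ltnS ltn_ord.
rewrite ltn_neqAle eq_sym e3 /=.
move: h1; rewrite /= leq_eqVlt eq_sym e1 /=; by case: (k : nat) hk.
Qed.

Lemma Fk_lt (p q : 'I_n.+1) : (q : nat) < n -> @Fw n k p q.
Proof. by rewrite /Fw => ->. Qed.
Lemma Fk_ge (p q : 'I_n.+1) : (k : nat) <= p -> @Fw n k p q.
Proof. by rewrite /Fw => ->; rewrite orbT. Qed.

Lemma tau_typ (q : 'I_n.+1) : (K : nat) < q -> (q : nat) < n ->
  s2 (tau inv (Av N q) (Tv q K K1) (Tv N q K) (Av K K1) x) = s2 x /\
  t2 (tau inv (Av N q) (Tv q K K1) (Tv N q K) (Av K K1) x) = comp (Av N q) (Av q K1).
Proof.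
move=> h1 h2.
have h1' := ltnW h1.
have [? ?] := wC1 o0 v (le_km1_k k) FK1K.
have [? ?] := wC1 o0 v h1' (Fk_lt K h2).
have [? ?] := wC1 o0 v (ltnW (leq_ltn_trans h2 (ltnSn n)) : q <= N) (Fk_ge N h1').
have [? ?] := wC1 o0 v (leq_trans (le_km1_k k) h1' : K1 <= q) (Fk_lt K1 h2).
have [? ?] := wC1 o0 v (le_k_n k) FKN.
have [? ?] := wC3 o0 v (le_km1_k k) h1' (Fk_lt K1 h2).
have [? ?] := wC3 o0 v h1' (ltnW (leq_ltn_trans h2 (ltnSn n)) : q <= N) (Fk_ge (p:=K) N (leqnn k)).
apply: (@tau_s2 _ _ inv_s2 inv_t2 (Ov K1) (Ov K) (Ov q) (Ov N) (Av K K1) (Av q K1) (Av q K) (s2 x) (Av N K)) => //.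
by rewrite -hx phi_eq.
Qed.

Lemma uC3 (p q r : 'I_n.+1) : p <= q -> q <= r -> @Fw n k.-1 p r ->
  s2 (Tu r q p) = Au r p /\ t2 (Tu r q p) = comp (Au r q) (Au q p).
Proof.
move=> h1 h2 hF; case E: ((p == K1) && (r == N)); last first.
  have hF' := Fred hF E.
  rewrite Tu_v // !Au_v //; first exact: wC3.
    exact: FwW hF' (leqnn p) h2.
  exact: FwW hF' h1 (leqnn r).
move/andP: E => [/eqP ep /eqP er]; subst p r.
have AN : Au N K1 = s2 x by rewrite /Au !eqxx.
rewrite /Tu !eqxx /=.
case: (eqVneq q K1) => [eq|nq1].
  subst q; rewrite ?eqxx /= s2_id2 t2_id2 AN uC2.
  by rewrite -(proj1 (uC1 (leq_trans h1 h2) hF)) AN comp_id1r.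
case: (eqVneq q N) => [eq|nqN].
  subst q; rewrite ?eqxx ?orbT /= s2_id2 t2_id2 AN uC2.
  by rewrite -(proj2 (uC1 (leq_trans h1 h2) hF)) AN comp_id1l.
rewrite /= ?(negbTE nq1) ?(negbTE nqN) /=.
case: (eqVneq q K) => [eq|nqK].
  subst q; rewrite AN -hx phi_eq !Au_v //; [exact: FK1K | exact: FKN].
have [l1 l2] := special_q h1 h2 (negbTE nq1) (negbTE nqN) (negbTE nqK).
have [T1 T2] := tau_typ l1 l2; rewrite T1 T2 AN !Au_v //.
  exact: Fk_lt.
exact: Fk_ge (ltnW l1).
Qed.

Lemma uC4 (p q r : 'I_n.+1) : p <= q -> q <= r -> @Fw n k.-1 p r -> (p = q \/ q = r) ->
  Tu r q p = id2 (Au r p).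
Proof.
move=> h1 h2 hF e; case E: ((p == K1) && (r == N)); last first.
  have hF' := Fred hF E.
  rewrite Tu_v // !Au_v //; exact: wC4.
move/andP: E => [/eqP ep /eqP er]; subst p r.
rewrite /Tu /Au !eqxx /=.
by case: e => ->; rewrite eqxx ?orbT.
Qed.

Lemma Tu_x : Tu N K K1 = x.
Proof.
rewrite /Tu !eqxx /=.
have -> : (K == K1) = false by rewrite -val_eqE eq_sym (ltn_eqF K1ltK).
have -> : (K == N) = false by rewrite -val_eqE (ltn_eqF KltN).
by rewrite ?eqxx.
Qed.

Lemma Tu_tau (q : 'I_n.+1) : (K : nat) < q -> (q : nat) < n ->
  Tu N q K1 = tau inv (Av N q) (Tv q K K1) (Tv N q K) (Av K K1) x.
Proof.
move=> h1 h2; rewrite /Tu !eqxx /=.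
have -> : (q == K1) = false.
  by rewrite -val_eqE eq_sym (ltn_eqF (leq_ltn_trans (leq_pred _) h1)).
have -> : (q == N) = false by rewrite -val_eqE (ltn_eqF h2).
by have -> : (q == K) = false by rewrite -val_eqE eq_sym (ltn_eqF h1).
Qed.

Lemma uC5 (p q r s : 'I_n.+1) : p < q -> q < r -> r < s -> @Fw n k.-1 p s ->
    vcomp (hcomp (id2 (Au s r)) (Tu r q p)) (Tu s r p) =
    vcomp (hcomp (Tu s r q) (id2 (Au q p))) (Tu s q p).
Proof.
move=> h1 h2 h3 hF.
have h1' := ltnW h1; have h2' := ltnW h2; have h3' := ltnW h3.
case E: ((p == K1) && (s == N)); last first.
  have hF' := Fred hF E.
  have h13 := leq_trans h1' h2'; have h24 := leq_trans h2' h3'.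
  have Fpr := FwW hF' (leqnn p) h3'.
  have Fqs := FwW hF' h1' (leqnn s).
  have Frs := FwW hF' h13 (leqnn s).
  have Fpq := FwW hF' (leqnn p) h24.
  rewrite (Tu_v q Fpr) (Tu_v r hF') (Tu_v r Fqs) (Tu_v q hF') (Au_v Frs) (Au_v Fpq).
  exact: wC5.
move/andP: E => [/eqP ep /eqP es]; subst p s.
have kq : (k : nat) <= q by move: h1; rewrite /=; case: (k : nat) hk.
have rn : (r : nat) < n by exact: h3.
have qn : (q : nat) < n by exact: ltn_trans h2 rn.
have Kr : (K : nat) < r by exact: leq_ltn_trans kq h2.
rewrite (Au_v (Fk_ge N (ltnW Kr))) (Tu_v q (Fk_lt K1 rn)) (Tu_v r (Fk_ge N kq))
  (Au_v (Fk_lt K1 qn)) (Tu_tau Kr rn).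
have [? ?] := wC1 o0 v (le_km1_k k) FK1K.
have [? ?] := wC1 o0 v (le_k_n k) FKN.
have [? ?] := wC1 o0 v (ltnW Kr) (Fk_lt K rn).
have [? ?] := wC1 o0 v (leq_trans (le_km1_k k) (ltnW Kr) : K1 <= r) (Fk_lt K1 rn).
have [? ?] := wC1 o0 v h3' (Fk_ge N (ltnW Kr)).
have [? ?] := wC3 o0 v (le_km1_k k) (ltnW Kr) (Fk_lt K1 rn).
have [? ?] := wC3 o0 v (ltnW Kr) h3' (Fk_ge (p:=K) N (leqnn k)).
have [? ?] := src_tx.
have tx : t2 x = comp (Av N K) (Av K K1) by rewrite -hx phi_eq.
have [? ?] := tau_typ Kr rn.
case: (eqVneq q K) => [eq|nqK].
  subst q; rewrite Tu_x.
  by apply: (@tau_eq _ _ inv_s2 inv_t2 inv_r (Ov K1) (Ov K) (Ov r) (Ov N) (Av K K1) (Av r K1) (Av r K) (s2 x) (Av N K)).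
have Kq : (K : nat) < q by rewrite ltn_neqAle kq andbT eq_sym; move: nqK; rewrite -val_eqE.
rewrite (Tu_tau Kq qn).
have [? ?] := tau_typ Kq qn.
have [? ?] := wC1 o0 v (ltnW Kq) (Fk_lt K qn).
have [? ?] := wC1 o0 v (leq_trans (le_km1_k k) (ltnW Kq) : K1 <= q) (Fk_lt K1 qn).
have [? ?] := wC1 o0 v (ltnW (leq_ltn_trans qn (ltnSn n)) : q <= N) (Fk_ge N kq).
have [? ?] := wC1 o0 v h2' (Fk_lt q rn).
have [? ?] := wC3 o0 v (le_km1_k k) (ltnW Kq) (Fk_lt K1 qn).
have [? ?] := wC3 o0 v (ltnW Kq) (ltnW (leq_ltn_trans qn (ltnSn n)) : q <= N) (Fk_ge (p:=K) N (leqnn k)).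
have [? ?] := wC3 o0 v (leq_trans (le_km1_k k) (ltnW Kq) : K1 <= q) h2' (Fk_lt K1 rn).
have [? ?] := wC3 o0 v (ltnW Kq) h2' (Fk_lt K rn).
have [? ?] := wC3 o0 v h2' h3' (Fk_ge N kq).
have CA := wC5 o0 v (le_km1_k k) (ltnW Kq) h2' (Fk_lt K1 rn).
have CB := wC5 o0 v (ltnW Kq) h2' h3' (Fk_ge (p:=K) N (leqnn k)).
apply: (@big_cocycle _ _ inv_s2 inv_l (Ov K1) (Ov K) (Ov q) (Ov r) (Ov N)
  (Av K K1) (Av q K1) (Av r K1) (s2 x) (Av q K) (Av r K) (Av N K) (Av r q) (Av N q) (Av N r)
  (Tv q K K1) (Tv r K K1) (Tv r q K1) (Tv r q K) (Tv N q K) (Tv N r K) (Tv N r q) x) => //.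
- by rewrite src_s2t2.
- by rewrite tgt_s2t2.
- by apply: (@tau_eq _ _ inv_s2 inv_t2 inv_r (Ov K1) (Ov K) (Ov q) (Ov N) (Av K K1) (Av q K1) (Av q K) (s2 x) (Av N K)).
- by apply: (@tau_eq _ _ inv_s2 inv_t2 inv_r (Ov K1) (Ov K) (Ov r) (Ov N) (Av K K1) (Av r K1) (Av r K) (s2 x) (Av N K)).
Qed.

Lemma inF_Fw j m (a : mono m n) (i i' : 'I_m.+1) : inF j a -> i <= i' ->
  @Fw n j (sval a i) (sval a i').
Proof.
rewrite /inF /Fw => /orP [h|h] hi; apply/orP; [left|right].
  apply: leq_ltn_trans h; apply: (proj2_sig a); exact: leq_ord.
apply: leq_trans h _; apply: (proj2_sig a); done.
Qed.

Definition unm m (a : mono m n) (_ : inF k.-1 a) : sdata C m := SD Ov Au Tu (sval a).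

Lemma unm_simplex m (a : mono m n) (Ha : inF k.-1 a) : is_simplex (unm Ha).
Proof.
apply: (@SD_simplex C n Ov Au Tu (fun p s => @Fw n k.-1 p s)).
- exact: (proj2_sig a).
- by move=> i j h; apply: inF_Fw.
- exact: uC1.
- exact: uC2.
- exact: uC3.
- exact: uC4.
- move=> p s p' s'; exact: FwW.
- exact: uC5.
Qed.

Lemma unm_nat m m' (a : mono m n) (b : mono m' m) (Ha : inF k.-1 a)
  (Hab : inF k.-1 (mcomp a b)) : unm Hab = restr (unm Ha) b.
Proof. rewrite /unm /=; apply: SD_restr; exact: (proj2_sig a). Qed.

Definition U : nerve_map C n k.-1 := @NMap C n k.-1 unm unm_simplex unm_nat.

Lemma U_res : resK U = v.
Proof.
apply: nerve_map_eq => m a Ha /=.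
rewrite /unm (repr o0) /SD; congr SData.
  apply: functional_extensionality => j; apply: functional_extensionality => i.
  case: ifP => // h; apply: Au_v; exact: inF_Fw.
apply: functional_extensionality => l; apply: functional_extensionality => j;
apply: functional_extensionality => i.
case: ifP => // /andP [h1 h2]; apply: Tu_v; apply: inF_Fw => //; exact: leq_trans h1 h2.
Qed.

Lemma U_cell : cell_nkkm1 U = x.
Proof. by rewrite /cell_nkkm1 /= /unm /SD /= Tu_x. Qed.

Section Uniq.
Variable u : nerve_map C n k.-1.
Hypothesis Eu : resK u = v.
Hypothesis Cu : cell_nkkm1 u = x.

Lemma getv_res m (a : mono m n) : inF k a -> getv o0 u a = getv o0 v a.
Proof.
move=> H; rewrite (getvE o0 u (inF_pred H)) (getvE o0 v H).
by rewrite -Eu.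
Qed.

Lemma Ou_eq p : Ow o0 u p = Ov p.
Proof.
rewrite /Ow getv_res //; rewrite /inF mkmE //.
by have := Fkpp p; rewrite /Fw.
Qed.

Lemma Au_eq_k (p q : 'I_n.+1) : p <= q -> @Fw n k p q -> Aw o0 u q p = Av q p.
Proof.
move=> h hF; rewrite /Aw getv_res //; rewrite /inF mkmE; last exact: f2_mono.
by move: hF; rewrite /Fw.
Qed.

Lemma Tu_eq_k (p q r : 'I_n.+1) : p <= q -> q <= r -> @Fw n k p r -> Tw o0 u r q p = Tv r q p.
Proof.
move=> h1 h2 hF; rewrite /Tw getv_res //; rewrite /inF mkmE; last exact: f3_mono.
by move: hF; rewrite /Fw.
Qed.

Lemma FK1N : @Fw n k.-1 K1 N. Proof. by rewrite /Fw leqnn orbT. Qed.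

Lemma cellE : cell_nkkm1 u = Tw o0 u N K K1.
Proof. by rewrite /cell_nkkm1 (repr o0). Qed.

Lemma AuN : Aw o0 u N K1 = s2 x.
Proof.
have [e1 _] := wC3 o0 u (le_km1_k k) (le_k_n k) FK1N.
by rewrite -e1 -cellE Cu.
Qed.

Lemma uA (p q : 'I_n.+1) : p <= q -> @Fw n k.-1 p q -> Aw o0 u q p = Au q p.
Proof.
move=> h hF; case E: ((p == K1) && (q == N)).
  by move/andP: E => [/eqP -> /eqP ->]; rewrite AuN /Au !eqxx.
rewrite /Au E; apply: Au_eq_k => //; exact: Fred.
Qed.

Lemma uT (p q r : 'I_n.+1) : p <= q -> q <= r -> @Fw n k.-1 p r -> Tw o0 u r q p = Tu r q p.
Proof.
move=> h1 h2 hF; case E: ((p == K1) && (r == N)); last first.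
  rewrite Tu_v; last exact: Fred.
  apply: Tu_eq_k => //; exact: Fred.
move/andP: E => [/eqP ep /eqP er]; subst p r.
case: (eqVneq q K1) => [eq|nq1].
  subst q; rewrite (wC4 o0 u (leqnn _) h2 hF (or_introl erefl)) AuN.
  by rewrite /Tu !eqxx.
case: (eqVneq q N) => [eq|nqN].
  subst q; rewrite (wC4 o0 u h1 (leqnn _) hF (or_intror erefl)) AuN.
  by rewrite /Tu !eqxx orbT.
case: (eqVneq q K) => [eq|nqK].
  by subst q; rewrite -cellE Cu Tu_x.
have [l1 l2] := special_q h1 h2 (negbTE nq1) (negbTE nqN) (negbTE nqK).
have l1' := ltnW l1.
have qN : q <= N := ltnW (leq_ltn_trans l2 (ltnSn n)).
rewrite (Tu_tau l1 l2).
have CC := wC5 o0 u (le_km1_k k) l1' qN hF.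
rewrite -cellE Cu (Au_eq_k qN (Fk_ge N l1')) (Tu_eq_k (le_km1_k k) l1' (Fk_lt K1 l2))
  (Tu_eq_k l1' qN (Fk_ge (p:=K) N (leqnn k))) (Au_eq_k (le_km1_k k) FK1K) in CC.
have [? ?] := wC1 o0 v (le_km1_k k) FK1K.
have [? ?] := wC1 o0 v (le_k_n k) FKN.
have [? ?] := wC1 o0 v l1' (Fk_lt K l2).
have [? ?] := wC1 o0 v (leq_trans (le_km1_k k) l1' : K1 <= q) (Fk_lt K1 l2).
have [? ?] := wC1 o0 v qN (Fk_ge N l1').
have [? ?] := wC3 o0 v (le_km1_k k) l1' (Fk_lt K1 l2).
have [? ?] := wC3 o0 v l1' qN (Fk_ge (p:=K) N (leqnn k)).
have tx : t2 x = comp (Av N K) (Av K K1) by rewrite -hx phi_eq.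
have [? ?] := tau_typ l1 l2.
have [_ e2] := wC3 o0 u (leq_trans (le_km1_k k) l1') qN hF.
rewrite (Au_eq_k qN (Fk_ge N l1')) (Au_eq_k (leq_trans (le_km1_k k) l1') (Fk_lt K1 l2)) in e2.
apply: (@cancel_l _ _ inv_s2 inv_l (hcomp (id2 (Av N q)) (Tv q K K1))).
- rewrite e2 s2_hcomp ?s2_id2 //; by congruence.
- rewrite s2_hcomp ?s2_id2; last by congruence.
  by congruence.
rewrite CC.
by symmetry; apply: (@tau_eq _ _ inv_s2 inv_t2 inv_r (Ov K1) (Ov K) (Ov q) (Ov N) (Av K K1) (Av q K1) (Av q K) (s2 x) (Av N K)).
Qed.

Lemma u_eq : u = U.
Proof.
apply: nerve_map_eq => m a Ha /=.
rewrite (repr o0) /unm /SD; congr SData.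
- by apply: functional_extensionality => i; rewrite Ou_eq.
- apply: functional_extensionality => j; apply: functional_extensionality => i.
  case: ifP => h; last by rewrite Ou_eq.
  apply: uA; [exact: (proj2_sig a) | exact: inF_Fw].
apply: functional_extensionality => l; apply: functional_extensionality => j;
apply: functional_extensionality => i.
case: ifP => [/andP [h1 h2]|_]; last by rewrite Ou_eq.
apply: uT; try exact: (proj2_sig a).
apply: inF_Fw => //; exact: leq_trans h1 h2.
Qed.
End Uniq.

End Main.

Theorem mainTheorem6 (C : TwoCat) (n : nat) (k : 'I_n) :
  cells_invertible C -> 2 <= n -> 1 <= k ->
  (forall u : nerve_map C n k.-1, phi (resK u) = t2 (cell_nkkm1 u)) /\
  (forall (v : nerve_map C n k) (a : Cell C), phi v = t2 a ->
     exists! u : nerve_map C n k.-1, resK u = v /\ cell_nkkm1 u = a).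
Proof.
move=> Hinv _ hk; split.
  move=> u; pose o0 := sob (nm u (tri_kn_in k)) ord0.
  rewrite /phi /cell_nkkm1 /= !(repr o0) /=.
  have hF : @Fw n k.-1 (vkm1 k) (vn n) by rewrite /Fw leqnn orbT.
  have [_ e] := wC3 o0 u (le_km1_k k) (le_k_n k) hF.
  by rewrite e.
move=> v a hv.
pose inv := fun c => proj1_sig (constructive_indefinite_description _ (Hinv c)).
have invP : forall c, [/\ s2 (inv c) = t2 c, t2 (inv c) = s2 c,
    vcomp (inv c) c = id2 (s2 c) & vcomp c (inv c) = id2 (t2 c)].
  move=> c; exact: (proj2_sig (constructive_indefinite_description _ (Hinv c))).
have i1 : forall c, s2 (inv c) = t2 c by move=> c; case: (invP c).
have i2 : forall c, t2 (inv c) = s2 c by move=> c; case: (invP c).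
have i3 : forall c, vcomp (inv c) c = id2 (s2 c) by move=> c; case: (invP c).
have i4 : forall c, vcomp c (inv c) = id2 (t2 c) by move=> c; case: (invP c).
pose o0 := sob (nm v (edge_kn_in k)) ord0.
exists (U hk i1 i2 i3 i4 o0 hv); split.
  by split; [exact: U_res | exact: U_cell].
move=> u [Eu Cu]; symmetry; exact: (u_eq hk i1 i2 i3 i4 o0 hv Eu Cu).
Qed.
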